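(* Fix integers $n,d\ge 1$, constants $0<h_{min}<h_{max}$, an initial state $\mathcal{X}^{(0)}=[\mathbf{x}_1^{(0)},\ldots,\mathbf{x}_n^{(0)}]\in\mathbb{R}^{dn}$, an initial bandwidth $h_1\in[h_{min},h_{max}]$, and a non-negative sequence $(\nu_k)$ with $\nu_k\to 0$. Let $(\mathcal{X}^{(k)},h_k)$ be generated by the Doubly Stochastic Mean-Shift (DSMS) process described in the context. Then almost surely, for every $k\ge 1$, $$\mathbb{E}\left[L_{h_{k+1}}(\mathcal{X}^{(k+1)})\,\middle|\,\mathcal{X}^{(k)},\,h_k\right]\ \ge\ L_{h_k}(\mathcal{X}^{(k)}).$$ Consequently, the sequence $\left(L_{h_k}(\mathcal{X}^{(k)})\right)_k$ is a discrete-time non-negative submartingale adapted to the process $(\mathcal{X}^{(k)},h_k)$.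
   Context: A profile function is a map $k:[0,\infty)\to\mathbb{R}_+$ that vanishes on $[1,\infty)$, is $C^1$, non-increasing and convex, with $k'(t)<0$ for all $t\in[0,1)$ (e.g. $k(t)=(1-t)_+^{\alpha}$, $\alpha=2,3,4$). The associated kernel on $\mathbb{R}^d$ is $K(\mathbf{u})=k(\|\mathbf{u}\|^2)$ and the weight function is $G(\mathbf{u})=-k'(\|\mathbf{u}\|^2)\ge 0$; $\|\cdot\|$ is the Euclidean norm. A state is $\mathcal{X}=[\mathbf{x}_1,\ldots,\mathbf{x}_n]\in\mathbb{R}^{dn}$ with $\mathbf{x}_i\in\mathbb{R}^d$. For $h>0$ define the cost $L_h(\mathcal{X})=\sum_{1\le i\le j\le n}K\big((\mathbf{x}_i-\mathbf{x}_j)/h\big)$ and the mean-shift operator $$\mathcal{S}_h(x;\mathcal{X})=\frac{\sum_{i=1}^n G\big((x-\mathbf{x}_i)/h\big)\,\mathbf{x}_i}{\sum_{i=1}^n G\big((x-\mathbf{x}_i)/h\big)},\quad x\in\mathbb{R}^d.$$ DSMS process: given $\mathcal{X}^{(0)}$, $h_1\in[h_{min},h_{max}]$ and $(\nu_k)$, for $k=0,1,2,\ldots$: if $k\ge1$, set $\delta_k=\min\{\nu_k,\ (h_k/h_{min})^2-1,\ 1-(h_k/h_{max})^2\}$, draw $\alpha_k$ uniformly on $(1-\delta_k,1+\delta_k)$ (with $\alpha_k=1$ if $\delta_k=0$), and set $h_{k+1}=h_k/\sqrt{\alpha_k}$ (so $h_{k+1}\in[h_{min},h_{max}]$); draw an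 index $i_k$ uniformly from $\{1,\ldots,n\}$; then set $\mathbf{x}_{i_k}^{(k+1)}=\mathcal{S}_{h_{k+1}}(\mathbf{x}_{i_k}^{(k)};\mathcal{X}^{(k)})$ and $\mathbf{x}_j^{(k+1)}=\mathbf{x}_j^{(k)}$ for $j\ne i_k$. The indices $i_k$ are i.i.d., independent of each other and of all previous choices, and the sequences $(i_k)$ and $(h_k)$ are independent. *)

(* Defs.v *)
From Stdlib Require Import Reals.
From Coquelicot Require Import Coquelicot.
Open Scope R_scope.

Fixpoint sumR (m : nat) (f : nat -> R) : R :=
  match m with
  | O => 0
  | S m' => sumR m' f + f m'
  end.

(* Points of R^d are functions nat -> R (coordinates 0..d-1);
   a state X : nat -> (nat -> R) lists particles x_0 .. x_{n-1}. *)
Definition vec := nat -> R.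
Definition state := nat -> vec.

Definition sqnorm (d : nat) (u : vec) : R := sumR d (fun j => (u j) ^ 2).
Definition vdiff (x y : vec) : vec := fun j => x j - y j.
Definition vscale (c : R) (x : vec) : vec := fun j => c * x j.

Definition is_profile (k k' : R -> R) : Prop :=
  (forall t, 0 <= t -> 0 <= k t) /\
  (forall t, 1 <= t -> k t = 0) /\
  (forall t, 0 < t -> is_derive k t (k' t)) /\
  filterlim (fun s => (k s - k 0) / s) (at_right 0) (locally (k' 0)) /\
  (forall t, 0 < t -> continuous k' t) /\
  filterlim k' (at_right 0) (locally (k' 0)) /\
  (forall s t, 0 <= s -> s <= t -> k t <= k s) /\
  (forall s t l, 0 <= s -> 0 <= t -> 0 <= l <= 1 ->
      k (l * s + (1 - l) * t) <= l * k s + (1 - l) * k t) /\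
  (forall t, 0 <= t < 1 -> k' t < 0).

Definition Kker (k : R -> R) (d : nat) (u : vec) : R := k (sqnorm d u).
Definition Gw (k' : R -> R) (d : nat) (u : vec) : R := - k' (sqnorm d u).

Definition Lcost (k : R -> R) (n d : nat) (h : R) (X : state) : R :=
  sumR n (fun j => sumR (S j) (fun i =>
     Kker k d (vscale (/ h) (vdiff (X i) (X j))))).

Definition meanshift (k' : R -> R) (n d : nat) (h : R) (X : state) (x : vec) : vec :=
  fun c =>
    sumR n (fun i => Gw k' d (vscale (/ h) (vdiff x (X i))) * X i c) /
    sumR n (fun i => Gw k' d (vscale (/ h) (vdiff x (X i)))).

Definition ms_step (k' : R -> R) (n d : nat) (h : R) (X : state) (i : nat) : state :=
  fun j => if Nat.eqb j i then meanshift k' n d h X (X i) else X j.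

Definition delta (hmin hmax nuk h : R) : R :=
  Rmin nuk (Rmin ((h / hmin) ^ 2 - 1) (1 - (h / hmax) ^ 2)).

Definition newh (h a : R) : R := h / sqrt a.

Definition E_alpha (del : R) (f : R -> R) : R :=
  if Rlt_dec 0 del then RInt f (1 - del) (1 + del) / (2 * del) else f 1.

(* One-step conditional expectation of L_{h_{k+1}}(X^{(k+1)}) given
   (X^{(k)}, h_k) = (X, h), at step k >= 1 (uses nu_k): alpha_k uniform,
   i_k uniform on {0..n-1}, independent. *)
Definition cond_exp_next (k k' : R -> R) (n d : nat) (hmin hmax nuk : R)
    (X : state) (h : R) : R :=
  E_alpha (delta hmin hmax nuk h) (fun a =>
    / INR n * sumR n (fun i =>
       Lcost k n d (newh h a) (ms_step k' n d (newh h a) X i))).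

(* Support of (X^{(k)}, h_k), k >= 1, for the DSMS process started at (X0, h1):
   (X^{(1)}, h_1) = (S-update of X0 at some i with bandwidth h1, h1), and each later
   pair is obtained with some admissible alpha_k and index i_k. *)
Inductive reachable (k' : R -> R) (n d : nat) (hmin hmax : R) (nu : nat -> R)
    (X0 : state) (h1 : R) : nat -> state -> R -> Prop :=
  | reach1 : forall i, (i < n)%nat ->
      reachable k' n d hmin hmax nu X0 h1 1 (ms_step k' n d h1 X0 i) h1
  | reachS : forall m X h a i,
      reachable k' n d hmin hmax nu X0 h1 m X h -> (i < n)%nat ->
      (let del := delta hmin hmax (nu m) h in
       (0 < del /\ 1 - del < a < 1 + del) \/ (~ 0 < del /\ a = 1)) ->
      reachable k' n d hmin hmax nu X0 h1 (S m)
        (ms_step k' n d (newh h a) X i) (newh h a).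

(* Main.v *)
Require Import Defs.
From Stdlib Require Import Reals Lra Lia Psatz.
From Coquelicot Require Import Coquelicot.
Open Scope R_scope.

Lemma sumR_ext m f g : (forall j, (j < m)%nat -> f j = g j) -> sumR m f = sumR m g.
Proof. induction m; simpl; intros H; auto. rewrite IHm by (intros; apply H; lia). rewrite H by lia; auto. Qed.
Lemma sumR_le m f g : (forall j, (j < m)%nat -> f j <= g j) -> sumR m f <= sumR m g.
Proof. induction m; simpl; intros H; try lra. pose proof (H m ltac:(lia)). pose proof (IHm ltac:(intros; apply H; lia)). lra. Qed.
Lemma sumR_plus m f g : sumR m (fun j => f j + g j) = sumR m f + sumR m g.
Proof. induction m; simpl; try lra. Qed.
Lemma sumR_scal m c f : sumR m (fun j => c * f j) = c * sumR m f.
Proof. induction m; simpl; try lra. Qed.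
Lemma sumR_swap m p F : sumR m (fun i => sumR p (fun j => F i j)) = sumR p (fun j => sumR m (fun i => F i j)).
Proof. induction m; simpl. { induction p; simpl; try lra; rewrite <- IHp; lra. } rewrite IHm. rewrite <- sumR_plus. auto. Qed.
Lemma sumR_nonneg m f : (forall j, (j < m)%nat -> 0 <= f j) -> 0 <= sumR m f.
Proof. intros H. apply Rle_trans with (sumR m (fun _ => 0)). { clear H; induction m; simpl; lra. } apply sumR_le; auto. Qed.
Lemma sumR_ge_term m f i : (forall j, (j < m)%nat -> 0 <= f j) -> (i < m)%nat -> f i <= sumR m f.
Proof. induction m; simpl; intros H Hi; try lia.
  destruct (Nat.eq_dec i m). { subst. pose proof (sumR_nonneg m f ltac:(intros; apply H; lia)). lra. }
  pose proof (IHm ltac:(intros; apply H; lia) ltac:(lia)). pose proof (H m ltac:(lia)). lra. Qed.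
Lemma sumR_const m c : sumR m (fun _ => c) = INR m * c.
Proof. induction m; [simpl; lra|]. change (sumR m (fun _ => c) + c = INR (S m) * c). rewrite IHm, S_INR. lra. Qed.
Lemma sumR_ind m i v : sumR m (fun a => if Nat.eqb a i then v else 0) = if Nat.ltb i m then v else 0.
Proof. induction m. reflexivity.
  change (sumR m (fun a => if Nat.eqb a i then v else 0) + (if Nat.eqb m i then v else 0) = if Nat.ltb i (S m) then v else 0).
  rewrite IHm.
  destruct (Nat.eqb_spec m i); destruct (Nat.ltb_spec i m); destruct (Nat.ltb_spec i (S m)); try lia; lra. Qed.

Lemma sumR_psi n i c : (i < n)%nat ->
  sumR n (fun b => sumR (S b) (fun a => if Nat.eqb a i then c b else if Nat.eqb b i then c a else 0))
  = sumR n c.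
Proof.
  intros Hi.
  assert (Hin : forall b, sumR (S b) (fun a => if Nat.eqb a i then c b else if Nat.eqb b i then c a else 0)
     = if Nat.ltb b i then 0 else if Nat.eqb b i then sumR (S i) c else c b).
  { intros b. destruct (Nat.ltb_spec b i).
    - transitivity (sumR (S b) (fun _ => 0)).
      { apply sumR_ext. intros j Hj. destruct (Nat.eqb_spec j i); try lia. destruct (Nat.eqb_spec b i); try lia. auto. }
      rewrite sumR_const; lra.
    - destruct (Nat.eqb_spec b i).
      + subst. apply sumR_ext. intros j Hj.
        destruct (Nat.eqb_spec j i); subst; auto.
      + transitivity (sumR (S b) (fun a => if Nat.eqb a i then c b else 0)).
        { apply sumR_ext. intros j Hj. destruct (Nat.eqb_spec b i); try lia. auto. }
        rewrite sumR_ind. destruct (Nat.ltb_spec i (S b)); auto; lia. }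
  assert (G : forall m, sumR m (fun b => sumR (S b) (fun a => if Nat.eqb a i then c b else if Nat.eqb b i then c a else 0))
     = if Nat.leb m i then 0 else sumR m c).
  { induction m. reflexivity.
    change (sumR m (fun b => sumR (S b) (fun a => if Nat.eqb a i then c b else if Nat.eqb b i then c a else 0))
      + sumR (S m) (fun a => if Nat.eqb a i then c m else if Nat.eqb m i then c a else 0)
      = if Nat.leb (S m) i then 0 else sumR m c + c m).
    rewrite IHm, Hin.
    destruct (Nat.leb_spec m i); destruct (Nat.ltb_spec m i); destruct (Nat.eqb_spec m i);
    destruct (Nat.leb_spec (S m) i); try lia; try lra.
    subst. change (0 + (sumR i c + c i) = sumR i c + c i). lra. }
  rewrite G. destruct (Nat.leb_spec n i); auto; lia.
Qed.
Lemma ball_R x e y : ball x e y -> Rabs (y - x) < e.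
Proof. intros H. unfold ball in H. simpl in H. unfold AbsRing_ball in H. unfold abs, minus, plus, opp in H; simpl in H. exact H. Qed.
Lemma R_ball x e y : Rabs (y - x) < e -> ball x e y.
Proof. intros H. unfold ball. simpl. unfold AbsRing_ball. unfold abs, minus, plus, opp; simpl. exact H. Qed.

Lemma tangent_finish (k : R -> R) s t l u D eps :
  0 < l <= 1 -> u = t - s -> u <> 0 -> 0 < eps ->
  k (s + l*u) <= l * k t + (1-l) * k s ->
  Rabs ((k (s + l*u) - k s)/(l*u) - D) < eps / Rabs u ->
  D * u <= k t - k s + eps.
Proof.
  intros Hl Hu Hu0 He Hc Hq.
  set (q := (k (s + l*u) - k s)/(l*u)) in *.
  assert (Hlu : l*u <> 0) by (apply Rmult_integral_contrapositive; split; lra).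
  assert (E1 : q * (l*u) = k (s + l*u) - k s) by (unfold q; unfold Rdiv; rewrite Rmult_assoc, Rinv_l; [ring|auto]).
  assert (E2 : l * (q*u) <= l * (k t - k s)) by nra.
  assert (E3 : q*u <= k t - k s) by (apply Rmult_le_reg_l with l; lra).
  assert (Hau : 0 < Rabs u) by (apply Rabs_pos_lt; auto).
  assert (E4 : (D - q) * u <= eps).
  { apply Rle_trans with (Rabs ((D - q)*u)). apply Rle_abs. rewrite Rabs_mult.
    rewrite <- Rabs_Ropp. replace (- (D - q)) with (q - D) by ring.
    apply Rlt_le. apply Rmult_lt_reg_r with (/ Rabs u). apply Rinv_0_lt_compat; auto.
    replace (Rabs (q - D) * Rabs u * / Rabs u) with (Rabs (q - D)) by (field; lra).
    exact Hq. }
  nra.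
Qed.

Lemma tangent k k' : is_profile k k' -> forall s t, 0 <= s -> 0 <= t -> k s + k' s * (t - s) <= k t.
Proof.
  intros Hp. destruct Hp as [Hk0 [Hk1 [Hder [Hd0 [Hc' [Hc0 [Hmon [Hconv Hneg]]]]]]]].
  intros s t Hs Ht.
  destruct (Req_dec t s) as [E|E]. { subst. lra. }
  assert (Hu0 : t - s <> 0) by lra.
  assert (Hau : 0 < Rabs (t - s)) by (apply Rabs_pos_lt; auto).
  cut (k' s * (t - s) <= k t - k s). lra.
  apply Rle_plus_epsilon. intros eps He.
  assert (He' : 0 < eps / Rabs (t - s)) by (apply Rdiv_lt_0_compat; auto).
  assert (Hconv' : forall l, 0 < l <= 1 -> k (s + l*(t-s)) <= l * k t + (1-l) * k s).
  { intros l Hl. replace (s + l*(t-s)) with (l*t + (1-l)*s) by ring. apply Hconv; auto; lra. }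
  destruct (Req_dec s 0) as [Es|Es].
  - subst s. assert (Ht0 : 0 < t) by lra.
    pose proof (proj1 (filterlim_locally _ _) Hd0 (mkposreal _ He')) as H1.
    destruct H1 as [e He2]. simpl in He2.
    set (l := Rmin (1/2) (e / (2 * t))).
    assert (Hl : 0 < l <= 1).
    { unfold l. split. apply Rmin_pos. lra. apply Rdiv_lt_0_compat. apply cond_pos. lra.
      apply Rle_trans with (1/2). apply Rmin_l. lra. }
    assert (Hlt : l * t < e).
    { assert (l <= e / (2*t)) by apply Rmin_r. pose proof (cond_pos e).
      apply Rle_lt_trans with (e / (2*t) * t). apply Rmult_le_compat_r; lra.
      replace (e / (2*t) * t) with (e/2) by (field; lra). lra. }
    apply (tangent_finish k 0 t l (t - 0) (k' 0) eps Hl eq_refl Hu0 He (Hconv' l Hl)).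
    replace (0 + l * (t - 0)) with (l*t) by ring.
    assert (Hb : ball (k' 0) (eps / Rabs (t - 0)) ((k (l*t) - k 0) / (l*t))).
    { apply He2. apply R_ball. rewrite Rminus_0_r. rewrite Rabs_pos_eq; nra. nra. }
    apply ball_R in Hb. replace (l * (t - 0)) with (l*t) by ring. exact Hb.
  - assert (Hs0 : 0 < s) by lra.
    pose proof (proj1 (is_derive_Reals _ _ _) (Hder s Hs0)) as HD.
    destruct (HD _ He') as [delta Hdel].
    set (l := Rmin (1/2) (delta / (2 * Rabs (t - s)))).
    assert (Hl : 0 < l <= 1).
    { unfold l. split. apply Rmin_pos. lra. apply Rdiv_lt_0_compat. apply cond_pos. lra.
      apply Rle_trans with (1/2). apply Rmin_l. lra. }
    assert (Hlt : l * Rabs (t - s) < delta).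
    { assert (l <= delta / (2*Rabs (t - s))) by apply Rmin_r. pose proof (cond_pos delta).
      apply Rle_lt_trans with (delta / (2*Rabs (t - s)) * Rabs (t - s)). apply Rmult_le_compat_r; lra.
      replace (delta / (2*Rabs (t - s)) * Rabs (t - s)) with (delta/2) by (field; lra). lra. }
    apply (tangent_finish k s t l (t - s) (k' s) eps Hl eq_refl Hu0 He (Hconv' l Hl)).
    apply Hdel. apply Rmult_integral_contrapositive; split; lra.
    rewrite Rabs_mult, (Rabs_pos_eq l); lra.
Qed.

Lemma kprime_nonpos k k' : is_profile k k' -> forall s, 0 <= s -> k' s <= 0.
Proof.
  intros Hp s Hs. pose proof (tangent k k' Hp s (s+1) Hs ltac:(lra)).
  destruct Hp as [Hk0 [Hk1 [Hder [Hd0 [Hc' [Hc0 [Hmon [Hconv Hneg]]]]]]]].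
  pose proof (Hmon s (s+1) Hs ltac:(lra)). replace (s + 1 - s) with 1 in H by ring. lra.
Qed.
Lemma sumR_minus m f g : sumR m (fun j => f j - g j) = sumR m f - sumR m g.
Proof. induction m; simpl; try lra. Qed.

Lemma sqnorm_scale d c v : sqnorm d (vscale c v) = c^2 * sqnorm d v.
Proof. unfold sqnorm, vscale. rewrite <- sumR_scal. apply sumR_ext. intros; ring. Qed.
Lemma sqnorm_nonneg d v : 0 <= sqnorm d v.
Proof. unfold sqnorm. apply sumR_nonneg. intros. apply pow2_ge_0. Qed.
Lemma sqnorm_sym d c u v : sqnorm d (vscale c (vdiff u v)) = sqnorm d (vscale c (vdiff v u)).
Proof. unfold sqnorm, vscale, vdiff. apply sumR_ext. intros; ring. Qed.
Lemma sqnorm_self d c u : sqnorm d (vscale c (vdiff u u)) = 0.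
Proof. unfold sqnorm, vscale, vdiff. transitivity (sumR d (fun _ => 0)).
  apply sumR_ext; intros; ring. rewrite sumR_const; ring. Qed.

Lemma ascent k k' n d h X i : is_profile k k' -> (i < n)%nat ->
  Lcost k n d h X <= Lcost k n d h (ms_step k' n d h X i).
Proof.
  intros Hp Hi.
  pose (C := / h). pose (x := X i). pose (y := meanshift k' n d h X x).
  pose (s := fun j => sqnorm d (vscale C (vdiff x (X j)))).
  pose (t := fun j => sqnorm d (vscale C (vdiff y (X j)))).
  pose (g := fun j => Gw k' d (vscale C (vdiff x (X j)))).
  pose (c := fun j => g j * (s j - t j)).
  assert (Hg : forall j, 0 <= g j).
  { intros j. unfold g, Gw. pose proof (kprime_nonpos k k' Hp _ (sqnorm_nonneg d (vscale C (vdiff x (X j))))). lra. }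
  assert (Hgi : 0 < g i).
  { unfold g, Gw. unfold x. rewrite sqnorm_self. destruct Hp as [_ [_ [_ [_ [_ [_ [_ [_ Hneg]]]]]]]].
    pose proof (Hneg 0 ltac:(lra)). lra. }
  pose (G := sumR n g).
  assert (HG : 0 < G).
  { pose proof (sumR_ge_term n g i (fun j _ => Hg j) Hi). unfold G; lra. }
  pose (N := fun l => sumR n (fun j => g j * X j l)).
  assert (Hy : forall l, N l = y l * G).
  { intros l. unfold y, meanshift. fold C. fold x. change (N l = N l / G * G). field. lra. }
  assert (Step1 : 0 <= sumR n c).
  { pose (A := fun l => C^2 * (x l - y l) * (x l + y l)).
    pose (B := fun l => -2 * C^2 * (x l - y l)).
    transitivity (sumR n (fun j => sumR d (fun l => A l * g j + B l * (g j * X j l)))).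
    2:{ apply Req_le. apply sumR_ext. intros j Hj. unfold c, s, t, sqnorm. rewrite <- sumR_minus.
        rewrite <- sumR_scal. apply sumR_ext. intros l Hl. unfold A, B, vscale, vdiff. ring. }
    rewrite sumR_swap. apply sumR_nonneg. intros l Hl.
    rewrite sumR_plus, sumR_scal, sumR_scal. fold G. fold (N l). rewrite Hy.
    unfold A, B. replace (C ^ 2 * (x l - y l) * (x l + y l) * G + -2 * C ^ 2 * (x l - y l) * (y l * G))
      with ((C * (x l - y l))^2 * G) by ring.
    apply Rmult_le_pos. apply pow2_ge_0. lra. }
  assert (Step2 : Lcost k n d h X + sumR n c <= Lcost k n d h (ms_step k' n d h X i)).
  { rewrite <- (sumR_psi n i c Hi). unfold Lcost. rewrite <- sumR_plus. apply sumR_le. intros b Hb.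
    rewrite <- sumR_plus. apply sumR_le. intros a Ha. unfold Kker, ms_step. fold C. fold x. fold y.
    destruct (Nat.eqb_spec a i); destruct (Nat.eqb_spec b i).
    - subst. rewrite !sqnorm_self. unfold c. pose proof (Hg i).
      assert (E0 : s i = 0) by (unfold s, x; apply sqnorm_self).
      assert (Et : 0 <= t i) by apply sqnorm_nonneg. nra.
    - subst a. change (k (s b) + - k' (s b) * (s b - t b) <= k (t b)).
      pose proof (tangent k k' Hp (s b) (t b) (sqnorm_nonneg _ _) (sqnorm_nonneg _ _)). lra.
    - subst b. change (k (sqnorm d (vscale C (vdiff (X a) x))) + c a <= k (sqnorm d (vscale C (vdiff (X a) y)))).
      rewrite (sqnorm_sym d C (X a) y), (sqnorm_sym d C (X a) x).
      change (k (s a) + - k' (s a) * (s a - t a) <= k (t a)).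
      pose proof (tangent k k' Hp (s a) (t a) (sqnorm_nonneg _ _) (sqnorm_nonneg _ _)). lra.
    - lra. }
  lra.
Qed.
Lemma c_ext (f g : R -> R) (x : R) : (forall y, f y = g y) -> continuous f x -> continuous g x.
Proof. intros H. apply continuous_ext. exact H. Qed.
Lemma c_plus (f g : R -> R) (x : R) : continuous f x -> continuous g x -> continuous (fun y => f y + g y) x.
Proof. intros; exact (continuous_plus f g x H H0). Qed.
Lemma c_mult (f g : R -> R) (x : R) : continuous f x -> continuous g x -> continuous (fun y => f y * g y) x.
Proof. intros; exact (continuous_mult f g x H H0). Qed.
Lemma c_const (c : R) (x : R) : continuous (fun _ => c) x.
Proof. apply continuous_const. Qed.
Lemma c_opp (f : R -> R) (x : R) : continuous f x -> continuous (fun y => - f y) x.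
Proof. intros H. apply (c_ext (fun y => (-1) * f y)). intros; ring. apply c_mult; auto. apply c_const. Qed.
Lemma c_minus (f g : R -> R) (x : R) : continuous f x -> continuous g x -> continuous (fun y => f y - g y) x.
Proof. intros. apply c_plus; auto. apply c_opp; auto. Qed.
Lemma c_pow2 (f : R -> R) (x : R) : continuous f x -> continuous (fun y => (f y)^2) x.
Proof. intros H. apply (c_ext (fun y => f y * f y)). intros; ring. apply c_mult; auto. Qed.
Lemma c_sum m (F : nat -> R -> R) (x : R) : (forall j, (j < m)%nat -> continuous (F j) x) -> continuous (fun y => sumR m (fun j => F j y)) x.
Proof. intros H. induction m; simpl. apply c_const. apply c_plus. apply IHm; intros; apply H; lia. apply H; lia. Qed.
Lemma c_div (f g : R -> R) (x : R) : continuous f x -> continuous g x -> g x <> 0 -> continuous (fun y => f y / g y) x.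
Proof. intros. apply c_mult; auto. apply continuous_Rinv_comp; auto. Qed.

Lemma c_comp_nonneg (phi q : R -> R) (x0 : R) :
  filterlim phi (at_right 0) (locally (phi 0)) ->
  (forall t, 0 < t -> continuous phi t) ->
  (forall x, 0 <= q x) -> continuous q x0 -> continuous (fun x => phi (q x)) x0.
Proof.
  intros Hr Hp Hq Hc.
  destruct (Rlt_dec 0 (q x0)) as [Hpos|Hz].
  { apply continuous_comp; auto. }
  assert (E : q x0 = 0) by (pose proof (Hq x0); lra).
  unfold continuous. apply filterlim_locally. intros eps.
  pose proof (proj1 (filterlim_locally _ _) Hr eps) as [e He].
  pose proof (proj1 (filterlim_locally _ _) Hc e) as Hqe.
  revert Hqe. apply filter_imp. intros x Hx. rewrite E.
  destruct (Req_dec (q x) 0) as [E2|E2].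
  { rewrite E2. apply ball_center. }
  apply He. apply R_ball. apply ball_R in Hx. rewrite E in Hx. exact Hx. pose proof (Hq x); lra.
Qed.

Lemma k_rc k k' : is_profile k k' -> filterlim k (at_right 0) (locally (k 0)).
Proof.
  intros Hp. destruct Hp as [Hk0 [Hk1 [Hder [Hd0 [Hc' [Hc0 [Hmon [Hconv Hneg]]]]]]]].
  apply filterlim_locally. intros eps.
  pose proof (proj1 (filterlim_locally _ _) Hd0 (mkposreal 1 Rlt_0_1)) as [e1 He1].
  set (M := Rabs (k' 0) + 1).
  assert (HM : 0 < M) by (unfold M; pose proof (Rabs_pos (k' 0)); lra).
  assert (He : 0 < Rmin e1 (eps / M)). { apply Rmin_pos. apply cond_pos. apply Rdiv_lt_0_compat. apply cond_pos. auto. }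
  exists (mkposreal _ He). intros y Hy Hy0. simpl in Hy. apply ball_R in Hy. rewrite Rminus_0_r in Hy.
  rewrite Rabs_pos_eq in Hy by lra.
  assert (H1 : ball (k' 0) 1 ((k y - k 0) / y)).
  { apply He1; auto. apply R_ball. rewrite Rminus_0_r, Rabs_pos_eq by lra.
    apply Rlt_le_trans with (Rmin e1 (eps / M)); auto. apply Rmin_l. }
  apply ball_R in H1. simpl in H1. apply R_ball.
  assert (Hq : Rabs ((k y - k 0)/y) <= M).
  { unfold M. replace ((k y - k 0)/y) with (((k y - k 0)/y - k' 0) + k' 0) by ring.
    eapply Rle_trans. apply Rabs_triang. lra. }
  replace (k y - k 0) with (y * ((k y - k 0)/y)) by (field; lra).
  rewrite Rabs_mult, (Rabs_pos_eq y) by lra.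
  assert (y < eps / M) by (apply Rlt_le_trans with (Rmin e1 (eps / M)); auto; apply Rmin_r).
  apply Rle_lt_trans with (y * M). apply Rmult_le_compat_l; lra.
  apply Rlt_le_trans with (eps / M * M). apply Rmult_lt_compat_r; lra.
  right. field. lra.
Qed.

Lemma k_comp k k' (q : R -> R) (x0 : R) : is_profile k k' -> (forall x, 0 <= q x) -> continuous q x0 ->
  continuous (fun x => k (q x)) x0.
Proof.
  intros Hp Hq Hc. apply c_comp_nonneg; auto. eapply k_rc; eauto.
  intros t Ht. destruct Hp as [_ [_ [Hder _]]]. exact (ex_derive_continuous (K:=R_AbsRing) (V:=R_NormedModule) k t (ex_intro _ _ (Hder t Ht))).
Qed.
Lemma k'_comp k k' (q : R -> R) (x0 : R) : is_profile k k' -> (forall x, 0 <= q x) -> continuous q x0 ->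
  continuous (fun x => k' (q x)) x0.
Proof.
  intros Hp Hq Hc. destruct Hp as [Hk0 [Hk1 [Hder [Hd0 [Hc' [Hc0 [Hmon [Hconv Hneg]]]]]]]].
  apply c_comp_nonneg; auto.
Qed.

Lemma c_sq d (C : R -> R) (V : R -> vec) (x0 : R) : continuous C x0 -> (forall l, continuous (fun x => V x l) x0) ->
  continuous (fun x => sqnorm d (vscale (C x) (V x))) x0.
Proof. intros HC HV. unfold sqnorm, vscale. apply c_sum. intros j _. apply c_pow2. apply c_mult; auto. Qed.

Lemma L_cont k k' n d (H : R -> R) X i (x0 : R) : is_profile k k' -> (i < n)%nat ->
  continuous (fun x => / H x) x0 ->
  continuous (fun x => Lcost k n d (H x) (ms_step k' n d (H x) X i)) x0.
Proof.
  intros Hp Hi HC.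
  assert (Hw : forall j, continuous (fun x => Gw k' d (vscale (/ H x) (vdiff (X i) (X j)))) x0).
  { intros j. unfold Gw. apply c_opp. apply (k'_comp k k' (fun x => sqnorm d (vscale (/ H x) (vdiff (X i) (X j))))); auto.
    intros; apply sqnorm_nonneg. apply c_sq; auto. intros; apply c_const. }
  assert (HY : forall p l, continuous (fun x => ms_step k' n d (H x) X i p l) x0).
  { intros p l. unfold ms_step. destruct (Nat.eqb p i). 2: apply c_const.
    unfold meanshift. apply c_div.
    - apply c_sum. intros j _. apply c_mult. apply Hw. apply c_const.
    - apply c_sum. intros j _. apply Hw.
    - assert (Hg : forall j, 0 <= Gw k' d (vscale (/ H x0) (vdiff (X i) (X j)))).
      { intros j. unfold Gw. pose proof (kprime_nonpos k k' Hp _ (sqnorm_nonneg d (vscale (/ H x0) (vdiff (X i) (X j))))). lra. }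
      assert (Hgi : 0 < Gw k' d (vscale (/ H x0) (vdiff (X i) (X i)))).
      { unfold Gw. rewrite sqnorm_self. destruct Hp as [_ [_ [_ [_ [_ [_ [_ [_ Hneg]]]]]]]].
        pose proof (Hneg 0 ltac:(lra)). lra. }
      cbv beta. pose proof (sumR_ge_term n _ i (fun j _ => Hg j) Hi). lra. }
  unfold Lcost. apply c_sum. intros b _. apply c_sum. intros a _. unfold Kker.
  apply (k_comp k k' (fun x => sqnorm d (vscale (/ H x) (vdiff (ms_step k' n d (H x) X i a) (ms_step k' n d (H x) X i b))))); auto.
  intros; apply sqnorm_nonneg. apply c_sq; auto. intros l. unfold vdiff. apply c_minus; apply HY.
Qed.
Lemma inv_newh h a : / newh h a = sqrt a * / h.
Proof. unfold newh, Rdiv. rewrite Rinv_mult, Rinv_inv. ring. Qed.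

Lemma g_cont k k' n d h X (x0 : R) : is_profile k k' ->
  continuous (fun a => / INR n * sumR n (fun i => Lcost k n d (newh h a) (ms_step k' n d (newh h a) X i))) x0.
Proof.
  intros Hp. apply c_mult. apply c_const.
  apply c_sum. intros i Hi.
  apply (L_cont k k' n d (fun a => newh h a) X i x0 Hp Hi).
    apply (c_ext (fun a => sqrt a * / h)). intros; rewrite inv_newh; auto.
    apply c_mult. apply continuous_sqrt. apply c_const.
Qed.
Lemma g_ge k k' n d h X a : is_profile k k' -> (1 <= n)%nat ->
  Lcost k n d (newh h a) X <= / INR n * sumR n (fun i => Lcost k n d (newh h a) (ms_step k' n d (newh h a) X i)).
Proof.
  intros Hp Hn.
  assert (Hn0 : 0 < INR n) by (apply lt_0_INR; lia).
  apply Rle_trans with (/ INR n * sumR n (fun _ => Lcost k n d (newh h a) X)).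
  { rewrite sumR_const. right. field. lra. }
  apply Rmult_le_compat_l. left; apply Rinv_0_lt_compat; auto.
  apply sumR_le. intros i Hi. apply ascent; auto.
Qed.

Lemma f_ge k k' n d h X a : is_profile k k' -> 0 <= a ->
  Lcost k n d h X + (a - 1) * sumR n (fun b => sumR (S b) (fun a' =>
     k' (sqnorm d (vscale (/ h) (vdiff (X a') (X b)))) * sqnorm d (vscale (/ h) (vdiff (X a') (X b)))))
  <= Lcost k n d (newh h a) X.
Proof.
  intros Hp Ha. unfold Lcost. rewrite <- sumR_scal, <- sumR_plus. apply sumR_le. intros b Hb.
  rewrite <- sumR_scal, <- sumR_plus. apply sumR_le. intros a' Ha'. unfold Kker.
  set (r := sqnorm d (vscale (/ h) (vdiff (X a') (X b)))).
  assert (E : sqnorm d (vscale (/ newh h a) (vdiff (X a') (X b))) = a * r).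
  { unfold r. rewrite !sqnorm_scale, inv_newh.
    replace ((sqrt a * / h)^2) with ((sqrt a * sqrt a) * (/ h)^2) by ring. rewrite sqrt_sqrt; auto. ring. }
  rewrite E. assert (Hr : 0 <= r) by apply sqnorm_nonneg.
  pose proof (tangent k k' Hp r (a * r) Hr ltac:(nra)).
  replace ((a - 1) * (k' r * r)) with (k' r * (a * r - r)) by ring. lra.
Qed.

Theorem proposition2 (k k' : R -> R) (n d : nat) (hmin hmax h1 : R)
    (X0 : state) (nu : nat -> R) :
  (1 <= n)%nat -> (1 <= d)%nat ->
  0 < hmin -> hmin < hmax -> hmin <= h1 <= hmax ->
  (forall m, 0 <= nu m) -> is_lim_seq nu 0 ->
  is_profile k k' ->
  forall (m : nat) (X : state) (h : R), (1 <= m)%nat ->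
    reachable k' n d hmin hmax nu X0 h1 m X h ->
    0 <= Lcost k n d h X /\
    Lcost k n d h X <= cond_exp_next k k' n d hmin hmax (nu m) X h.
Proof.
  intros Hn Hd Hmin Hmm Hh1 Hnu Hlim Hp m X h Hm Hr.
  split.
  { unfold Lcost. apply sumR_nonneg. intros b _. apply sumR_nonneg. intros a _. unfold Kker.
    destruct Hp as [Hk0 _]. apply Hk0. apply sqnorm_nonneg. }
  unfold cond_exp_next, E_alpha.
  set (del := delta hmin hmax (nu m) h).
  set (gf := fun a => / INR n * sumR n (fun i => Lcost k n d (newh h a) (ms_step k' n d (newh h a) X i))).
  destruct (Rlt_dec 0 del) as [Hdel|Hdel].
  2:{ assert (E : newh h 1 = h) by (unfold newh; rewrite sqrt_1; field).
      rewrite <- E at 1. apply (g_ge k k' n d h X 1 Hp Hn). }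
  assert (Hdel1 : del <= 1).
  { unfold del, delta. apply Rle_trans with (Rmin ((h / hmin) ^ 2 - 1) (1 - (h / hmax) ^ 2)). apply Rmin_r.
    apply Rle_trans with (1 - (h / hmax) ^ 2). apply Rmin_r. pose proof (pow2_ge_0 (h / hmax)). lra. }
  set (L := Lcost k n d h X).
  set (beta := sumR n (fun b => sumR (S b) (fun a' =>
     k' (sqnorm d (vscale (/ h) (vdiff (X a') (X b)))) * sqnorm d (vscale (/ h) (vdiff (X a') (X b)))))).
  set (aff := fun a => L + (a - 1) * beta).
  assert (Hint : is_RInt aff (1 - del) (1 + del) (2 * del * L)).
  { set (F := fun a => L * a + beta * (a - 1)^2 / 2).
    replace (2 * del * L) with (minus (F (1 + del)) (F (1 - del))).
    apply (is_RInt_derive (V:=R_CompleteNormedModule) F aff).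
    - intros x _. unfold F, aff. auto_derive. auto. change (L * 1 + beta * (1 * ((1 + 1) * ((x + - (1)) * 1))) * / 2 = L + (x - 1) * beta). field.
    - intros x _. unfold aff. apply c_plus. apply c_const. apply c_mult. apply c_minus. apply continuous_id. apply c_const. apply c_const.
    - unfold minus, plus, opp, F; simpl. field. }
  assert (Hle : RInt aff (1 - del) (1 + del) <= RInt gf (1 - del) (1 + del)).
  { apply RInt_le. lra. exists (2 * del * L); auto.
    apply (ex_RInt_continuous (V:=R_CompleteNormedModule)). intros z _. apply g_cont; auto.
    intros x Hx. unfold aff, gf, L, beta.
    eapply Rle_trans. apply (f_ge k k' n d h X x Hp). lra. apply g_ge; auto. }
  rewrite (is_RInt_unique _ _ _ _ Hint) in Hle.
  apply Rmult_le_reg_r with (2 * del). lra.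
  unfold Rdiv. rewrite Rmult_assoc, Rinv_l by lra. fold gf. lra.
Qed.
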